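(* There is an absolute constant $K$ such that the following holds. Let $0\le\xi\le1/2$ and let $\rho\in\mathbb{R}^{n\times n}$ be psd with $\operatorname{tr}(\rho)=1$, $\rho_{ii}>0$ for all $i$, and $\sum_i|\rho_{ii}-1/n|\le\xi^3$. Let $\sigma\in\mathbb{R}^{n\times n}$ have entries $\sigma_{ij}=\frac{\rho_{ij}}{n\sqrt{\rho_{ii}\rho_{jj}}}$. Then $\|\rho-\sigma\|_{\mathrm{tr}}\le K\xi$.
   Context: $\|A\|_{\mathrm{tr}}$ is the trace norm. The paper writes the conclusion as $\|\rho-\sigma\|_{\mathrm{tr}}=\mathcal{O}(\xi)$, with the implied constant independent of $n$ and $\rho$. *)

(* Defs.v *)
From mathcomp Require Import all_boot all_order all_algebra.
From mathcomp Require Import all_classical all_reals.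
Set Implicit Arguments. Unset Strict Implicit. Unset Printing Implicit Defensive.
Import Order.TTheory GRing.Theory Num.Theory.
Local Open Scope ring_scope.

Definition psd (R : realType) (n : nat) (A : 'M[R]_n) : Prop :=
  A^T = A /\ forall x : 'cV[R]_n, 0 <= (x^T *m A *m x) 0 0.

(* B is the psd square root |A| = sqrt(A^T A). Then the trace norm
   ||A||_tr = \tr |A| (sum of singular values). *)
Definition is_abs_mx (R : realType) (n : nat) (A B : 'M[R]_n) : Prop :=
  psd B /\ B *m B = A^T *m A.

Definition sigma_of (R : realType) (n : nat) (rho : 'M[R]_n) : 'M[R]_n :=
  \matrix_(i, j) (rho i j / (n%:R * Num.sqrt (rho i i * rho j j))).

(* Main.v *)
Require Import Defs.
From mathcomp Require Import all_boot all_order all_algebra.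
From mathcomp Require Import all_classical all_reals.
From mathcomp Require Import ring lra.
Import Order.TTheory GRing.Theory Num.Theory.
Local Open Scope ring_scope.

Definition qf {R : realType} {n} (A : 'M[R]_n) (x y : 'cV[R]_n) : R :=
  (x^T *m A *m y) 0 0.

Lemma qfE {R : realType} {n} (A : 'M[R]_n) x y :
  qf A x y = \sum_i \sum_j x i 0 * A i j * y j 0.
Proof.
rewrite /qf mxE; under eq_bigr => j _ do rewrite mxE big_distrl /=.
rewrite exchange_big /=; apply: eq_bigr => i _; apply: eq_bigr => j _.
by rewrite mxE.
Qed.

Lemma qf_sym {R : realType} {n} (A : 'M[R]_n) x y : A^T = A -> qf A x y = qf A y x.
Proof.
move=> sA; rewrite /qf.
have -> : (y^T *m A *m x) = (x^T *m A *m y)^T by rewrite !trmx_mul trmxK sA mulmxA.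
by rewrite [in RHS]mxE.
Qed.

Lemma qfDl {R : realType} {n} (A : 'M[R]_n) x y z : qf A (x + y) z = qf A x z + qf A y z.
Proof. by rewrite /qf linearD /= !mulmxDl mxE. Qed.
Lemma qfZl {R : realType} {n} (A : 'M[R]_n) t x z : qf A (t *: x) z = t * qf A x z.
Proof. by rewrite /qf linearZ /= -!scalemxAl mxE. Qed.
Lemma qfDr {R : realType} {n} (A : 'M[R]_n) x y z : qf A z (x + y) = qf A z x + qf A z y.
Proof. by rewrite /qf mulmxDr mxE. Qed.
Lemma qfZr {R : realType} {n} (A : 'M[R]_n) t x z : qf A z (t *: x) = t * qf A z x.
Proof. by rewrite /qf -!scalemxAr mxE. Qed.

Lemma qf_delta {R : realType} {n} (A : 'M[R]_n) i j :
  qf A (delta_mx i 0) (delta_mx j 0) = A i j.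
Proof.
rewrite qfE (bigD1 i) //= [X in _ + X]big1; last first.
  move=> k ki; apply: big1 => l _; rewrite mxE (negbTE ki) /= mul0r mul0r //.
rewrite addr0 (bigD1 j) //= [X in _ + X]big1; last first.
  by move=> k kj; rewrite [delta_mx j 0 k 0]mxE (negbTE kj) mulr0.
by rewrite !mxE !eqxx /= mul1r mulr1 !addr0.
Qed.

Lemma qf_expand {R : realType} {n} (A : 'M[R]_n) x y t : A^T = A ->
  qf A (x + t *: y) (x + t *: y) = qf A x x + 2 * t * qf A x y + t ^+ 2 * qf A y y.
Proof.
move=> sA; rewrite qfDl !qfDr !qfZl !qfZr (qf_sym _ y x) //.
by rewrite expr2; ring.
Qed.

Lemma psdE {R : realType} {n} (A : 'M[R]_n) :
  psd A <-> A^T = A /\ forall x, 0 <= qf A x x.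
Proof. by []. Qed.

Lemma psd_CS {R : realType} {n} (A : 'M[R]_n) x y : psd A -> 0 < qf A y y ->
  qf A x y ^+ 2 <= qf A x x * qf A y y.
Proof.
move=> [sA pA] ya; set a := qf A y y; set b := qf A x y.
set t := - b / a.
have h : 0 <= qf A (x + t *: y) (x + t *: y) := pA _; rewrite qf_expand // -/a -/b in h.
have e : a * (qf A x x + 2 * t * b + t ^+ 2 * a) = qf A x x * a - b ^+ 2.
  rewrite /t; field; exact: lt0r_neq0.
rewrite -subr_ge0 -e; apply: mulr_ge0 => //; exact: ltW.
Qed.

Lemma psd_zero {R : realType} {n} (A : 'M[R]_n) x y : psd A -> qf A y y = 0 ->
  qf A x y = 0.
Proof.
move=> [sA pA] y0; apply/eqP; apply/negP => /negP b0.
set b := qf A x y in b0.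
set t := - (qf A x x + 1) / (2 * b).
have h : 0 <= qf A (x + t *: y) (x + t *: y) := pA _; rewrite qf_expand // y0 -/b in h.
have e : qf A x x + 2 * t * b + t ^+ 2 * 0 = -1.
  rewrite /t; field; exact: b0.
by move: h; rewrite e; lra.
Qed.

Lemma mx11_mul {R : realType} (a b : 'M[R]_1) : (a *m b) 0 0 = a 0 0 * b 0 0.
Proof. by rewrite mxE big_ord1. Qed.

Lemma outer_entry {R : realType} {n} (v : 'cV[R]_n) i j : (v *m v^T) i j = v i 0 * v j 0.
Proof. by rewrite mxE big_ord1 mxE. Qed.

Lemma qf_outer {R : realType} {n} (v x : 'cV[R]_n) :
  qf (v *m v^T) x x = (x^T *m v) 0 0 ^+ 2.
Proof.
rewrite /qf mulmxA -mulmxA mx11_mul expr2; congr (_ * _).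
have -> : v^T *m x = (x^T *m v)^T by rewrite trmx_mul trmxK.
by rewrite mxE.
Qed.

Lemma qfBA {R : realType} {n} (A B : 'M[R]_n) x y : qf (A - B) x y = qf A x y - qf B x y.
Proof. by rewrite /qf mulmxBr mulmxBl !mxE. Qed.

Lemma factor_aux {R : realType} {n} m : (m <= n)%N -> forall A : 'M[R]_n, psd A ->
  (forall i j : 'I_n, (m <= i)%N -> A i j = 0) ->
  exists W : 'M[R]_n, A = W *m W^T /\ (forall i j : 'I_n, (m <= j)%N -> W i j = 0).
Proof.
elim: m => [_ A _ A0|m IH hm A psdA Az].
  exists 0; split => // ; last by move=> *; rewrite mxE.
  by apply/matrixP => i j; rewrite A0 // mul0mx mxE.
have [sA pA] := psdA.
have Asym i j : A i j = A j i by rewrite -{1}sA mxE.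
pose p := Ordinal hm.
have a0 : 0 <= A p p by rewrite -qf_delta; apply: pA.
have [ae|apos] := eqVneq (A p p) 0.
  have hz : forall i j : 'I_n, (m <= i)%N -> A i j = 0.
    move=> i j; rewrite leq_eqVlt => /orP [/eqP mi|]; last exact: Az.
    have -> : i = p by apply: val_inj.
    rewrite Asym -qf_delta; apply: psd_zero => //; by rewrite qf_delta.
  have [W [eW hW]] := IH (ltnW hm) A psdA hz.
  by exists W; split => // i j /ltnW; apply: hW.
have ap : 0 < A p p by rewrite lt0r apos.
set a := A p p in a0 ap apos.
set s := Num.sqrt a.
have sp : 0 < s by rewrite sqrtr_gt0.
have ss : s * s = a by rewrite -expr2 sqr_sqrtr.
pose v : 'cV[R]_n := s^-1 *: col p A.
have ve i : v i 0 = s^-1 * A i p by rewrite !mxE.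
pose A' := A - v *m v^T.
have psdA' : psd A'.
  split.
    by rewrite /A' linearB /= sA trmx_mul trmxK.
  move=> x; change (0 <= qf A' x x).
  rewrite /A' qfBA qf_outer.
  have -> : (x^T *m v) 0 0 = s^-1 * qf A x (delta_mx p 0).
    by rewrite /v -scalemxAr mxE /qf colE mulmxA.
  have cs := @psd_CS _ _ A x (delta_mx p 0) psdA.
  rewrite qf_delta in cs; have {cs} := cs ap.
  set b := qf A x (delta_mx p 0); set q := qf A x x => cs.
  have e : (q - (s^-1 * b) ^+ 2) * a = q * a - b ^+ 2.
    rewrite -ss; field; exact: lt0r_neq0.
  rewrite -(pmulr_lge0 _ ap) e subr_ge0 //.
have hz : forall i j : 'I_n, (m <= i)%N -> A' i j = 0.
  move=> i j; rewrite leq_eqVlt => /orP [/eqP mi|mi].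
    have -> : i = p by apply: val_inj.
    rewrite /A' !mxE big_ord1 !mxE -/a Asym.
    rewrite -ss; field; exact: lt0r_neq0.
  rewrite /A' !mxE big_ord1 !mxE (Az i j) // (Az i p) //; by rewrite !(mulr0, mul0r) subr0.
have [W' [eW' hW']] := IH (ltnW hm) A' psdA' hz.
pose W := W' + v *m (delta_mx 0 p : 'rV[R]_n).
exists W; split; last first.
  move=> i j mj; rewrite /W !mxE big_ord1 !mxE hW' ?(ltnW mj) //.
  have -> : (j == p) = false.
    by apply/negbTE; apply/eqP => pj; move: mj; rewrite pj /= ltnn.
  by rewrite andbF mulr0 add0r.
have W'p : W' *m (delta_mx p 0 : 'cV[R]_n) = 0.
  by rewrite -colE; apply/matrixP => i j; rewrite !mxE hW'.
rewrite /W linearD /= trmx_mul trmx_delta mulmxDl !mulmxDr.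
rewrite mulmxA W'p mul0mx addr0.
have -> : v *m delta_mx 0 p *m W'^T = 0.
  by rewrite -mulmxA -trmx_delta -trmx_mul W'p linear0 mulmx0.
rewrite add0r -(mulmxA v) (mulmxA (delta_mx 0 p)) mul_delta_mx.
have -> : (delta_mx 0 0 : 'M[R]_1) = 1%:M.
  by apply/matrixP => i j; rewrite !ord1 !mxE.
by rewrite mul1mx -eW' /A' subrK.
Qed.

Lemma psd_factor {R : realType} {n} (A : 'M[R]_n) : psd A ->
  exists W : 'M[R]_n, A = W *m W^T.
Proof.
move=> pA; have [W [eW _]] := @factor_aux R n n (leqnn n) A pA
  (fun i j (h : (n <= i)%N) => False_ind _ (elimF idP (leq_gtF h) (ltn_ord i))).
by exists W.
Qed.

Definition dot {R : realType} {n} (x y : 'cV[R]_n) : R := (x^T *m y) 0 0.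

Lemma dotE {R : realType} {n} (x y : 'cV[R]_n) : dot x y = \sum_i x i 0 * y i 0.
Proof. by rewrite /dot mxE; apply: eq_bigr => i _; rewrite mxE. Qed.

Lemma dot_ge0 {R : realType} {n} (x : 'cV[R]_n) : 0 <= dot x x.
Proof. by rewrite dotE; apply: sumr_ge0 => i _; rewrite -expr2 sqr_ge0. Qed.

Lemma dot_eq0 {R : realType} {n} (x : 'cV[R]_n) : dot x x = 0 -> x = 0.
Proof.
rewrite dotE => h; apply/matrixP => i j; rewrite ord1 mxE.
have hk : forall k : 'I_n, true -> 0 <= x k 0 * x k 0.
  by move=> k _; rewrite -expr2 sqr_ge0.
have := @psumr_eq0P R _ (fun _ => true) (fun k => x k 0 * x k 0) hk h i isT.
by move/eqP; rewrite mulf_eq0 orbb => /eqP.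
Qed.

Lemma dotC {R : realType} {n} (x y : 'cV[R]_n) : dot x y = dot y x.
Proof. by rewrite !dotE; apply: eq_bigr => i _; rewrite mulrC. Qed.

Lemma dotDl {R : realType} {n} (x y z : 'cV[R]_n) : dot (x + y) z = dot x z + dot y z.
Proof. by rewrite /dot linearD /= mulmxDl mxE. Qed.
Lemma dotZl {R : realType} {n} t (x z : 'cV[R]_n) : dot (t *: x) z = t * dot x z.
Proof. by rewrite /dot linearZ /= -scalemxAl mxE. Qed.
Lemma dotDr {R : realType} {n} (x y z : 'cV[R]_n) : dot z (x + y) = dot z x + dot z y.
Proof. by rewrite /dot mulmxDr mxE. Qed.
Lemma dotZr {R : realType} {n} t (x z : 'cV[R]_n) : dot z (t *: x) = t * dot z x.
Proof. by rewrite /dot -scalemxAr mxE. Qed.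

Lemma trace_bound {R : realType} {n} (A B : 'M[R]_n) (e : R) : 0 < e ->
  psd B -> B *m B = A^T *m A ->
  exists M : 'M[R]_n, (forall v, dot (M *m v) (M *m v) <= dot v v) /\
    \tr B <= \tr (M *m A^T) + n%:R * e.
Proof.
move=> e0 [sB pB] BB.
pose Be := B + e%:M.
have sBe : Be^T = Be by rewrite /Be linearD /= sB tr_scalar_mx.
have Bex (u : 'cV[R]_n) : Be *m u = B *m u + e *: u by rewrite /Be mulmxDl -scalar_mxC mul_mx_scalar.
have qBe u : (u^T *m Be *m u) 0 0 = (u^T *m B *m u) 0 0 + e * dot u u.
  by rewrite -mulmxA Bex mulmxDr mxE -scalemxAr [X in _ + X]mxE mulmxA.
have qBe0 (u : 'cV[R]_n) : 0 <= (u^T *m Be *m u) 0 0.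
  by rewrite qBe; apply: addr_ge0 => //; apply: mulr_ge0; [exact: ltW|exact: dot_ge0].
have uBe : Be \in unitmx.
  rewrite -row_free_unit -kermx_eq0; apply/eqP/row_matrixP => i; rewrite row0.
  set r := row i (kermx Be).
  have rB : r *m Be = 0 by rewrite /r -row_mul mulmx_ker row0.
  have Bx : Be *m r^T = 0 by rewrite -sBe -trmx_mul rB linear0.
  have q0 : (r^T^T *m Be *m r^T) 0 0 = 0 by rewrite -mulmxA Bx mulmx0 mxE.
  have : e * dot r^T r^T <= 0.
    by rewrite -q0 qBe lerDr; apply: pB.
  rewrite pmulr_rle0 // => h.
  have : dot r^T r^T = 0 by apply/le_anti; rewrite h dot_ge0.
  by move/dot_eq0 => /(congr1 trmx); rewrite trmxK linear0.
pose Bi := invmx Be.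
have BiBe : Bi *m Be = 1%:M by rewrite mulVmx.
have BeBi : Be *m Bi = 1%:M by rewrite mulmxV.
exists (A *m Bi); split.
  move=> v; set u := Bi *m v.
  have vu : v = Be *m u by rewrite /u mulmxA BeBi mul1mx.
  have h1 : dot (A *m u) (A *m u) = dot (B *m u) (B *m u).
    by rewrite /dot !trmx_mul sB -!mulmxA (mulmxA A^T) -BB !mulmxA.
  rewrite -mulmxA -/u h1 vu Bex dotDl !dotDr !dotZl !dotZr.
  have q : 0 <= dot u (B *m u) by rewrite /dot mulmxA; apply: pB.
  rewrite (dotC (B *m u) u).
  have := dot_ge0 u; have := ltW e0; move: q.
  set a := dot u (B *m u); set b := dot u u; set c := dot (B *m u) (B *m u).
  move=> q he hb; nra.
have e1 : \tr B = \tr (Bi *m (B *m B)) + e * \tr (Bi *m B).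
  rewrite -{1}(mul1mx B) -BiBe -mulmxA /Be mulmxDl -scalar_mxC mul_mx_scalar.
  by rewrite mulmxDr -scalemxAr mxtraceD mxtraceZ.
have e2 : \tr (Bi *m (B *m B)) = \tr (A *m Bi *m A^T).
  by rewrite BB mulmxA mxtrace_mulC mulmxA.
have trBi : 0 <= \tr Bi.
  rewrite /mxtrace; apply: sumr_ge0 => k _.
  pose w : 'cV[R]_n := delta_mx k 0.
  have -> : Bi k k = (w^T *m Bi *m w) 0 0.
    by rewrite -(qf_delta Bi k k).
  set u := Bi *m w.
  have wu : w = Be *m u by rewrite /u mulmxA BeBi mul1mx.
  rewrite -mulmxA -/u {1}wu trmx_mul sBe; exact: qBe0.
have e3 : \tr (Bi *m B) <= n%:R.
  have -> : B = Be - e%:M by rewrite /Be addrK.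
  rewrite mulmxBr BiBe mul_mx_scalar linearB /= mxtrace1 mxtraceZ.
  by rewrite lerBlDr lerDl; apply: mulr_ge0 => //; exact: ltW.
rewrite e1 e2 lerD2l mulrC ler_wpM2r //; exact: ltW.
Qed.



Lemma col_mulmx {R : realType} {n} (M Q : 'M[R]_n) j : col j (M *m Q) = M *m col j Q.
Proof. by apply/matrixP => i k; rewrite !mxE; apply: eq_bigr => l _; rewrite !mxE. Qed.

Lemma trTmul_entry {R : realType} {n} (X Y : 'M[R]_n) j :
  (X^T *m Y) j j = dot (col j X) (col j Y).
Proof. by rewrite /dot !mxE; apply: eq_bigr => i _; rewrite !mxE. Qed.

Lemma dot_amgm {R : realType} {n} (p z : 'cV[R]_n) t : 0 < t ->
  dot p z <= (t * dot p p + dot z z / t) / 2.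
Proof.
move=> t0.
have h := dot_ge0 (t *: p + (-1) *: z).
rewrite !dotDl !dotDr !dotZl !dotZr (dotC z p) in h.
move: h; set a := dot p p; set b := dot p z; set c := dot z z => h.
have e : (t * a + c / t) / 2 - b = (t * (t * a) + (t * (-1 * b) + (-1 * (t * b) + -1 * (-1 * c)))) / (2 * t).
  field; exact: lt0r_neq0.
rewrite -subr_ge0 e; apply: divr_ge0; [by move: h; nra | nra].
Qed.

Lemma contr_tr {R : realType} {n} (M P Q : 'M[R]_n) t : 0 < t ->
  (forall v, dot (M *m v) (M *m v) <= dot v v) ->
  \tr (P^T *m M *m Q) <= (t * \tr (P^T *m P) + \tr (Q^T *m Q) / t) / 2.
Proof.
move=> t0 hM.
rewrite -mulmxA /mxtrace.
rewrite mulr_suml mulr_sumr -big_split /= mulr_suml.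
apply: ler_sum => j _.
rewrite !trTmul_entry col_mulmx.
apply: (le_trans (dot_amgm _ _ _ t0)).
rewrite ler_pM2r ?invr_gt0 // lerD2l ler_pM2r ?invr_gt0 //; apply: hM.
Qed.



Lemma sq_ineq {R : realType} (s q : R) : 0 < s -> 0 < q -> (s - q) ^+ 2 <= `|s ^+ 2 - q ^+ 2|.
Proof.
move=> s0 q0; case: (lerP q s) => h.
  rewrite ger0_norm; nra.
rewrite ler0_norm; nra.
Qed.

Lemma trDiagW {R : realType} {n} (W : 'M[R]_n) (g : 'rV[R]_n) :
  \tr ((diag_mx g *m W) *m (diag_mx g *m W)^T) = \sum_i g 0 i ^+ 2 * (W *m W^T) i i.
Proof.
rewrite trmx_mul tr_diag_mx -!mulmxA (mulmxA W) /mxtrace; apply: eq_bigr => i _.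
by rewrite mul_diag_mx mxE mul_mx_diag mxE; ring.
Qed.

Lemma entry_bound {R : realType} (n : nat) (d : R) : (0 < n)%N -> 0 < d ->
  (1 - (Num.sqrt n%:R * Num.sqrt d)^-1) ^+ 2 * d <= `|d - 1 / n%:R|.
Proof.
move=> n0 d0.
set r := Num.sqrt n%:R; set s := Num.sqrt d.
have r0 : 0 < r by rewrite sqrtr_gt0 ltr0n.
have s0 : 0 < s by rewrite sqrtr_gt0.
have rr : r ^+ 2 = n%:R by rewrite sqr_sqrtr // ler0n.
have ss : s ^+ 2 = d by rewrite sqr_sqrtr // ltW.
have e1 : (1 - (r * s)^-1) ^+ 2 * d = (s - r^-1) ^+ 2.
  rewrite -ss; field; apply/andP; split; exact: lt0r_neq0.
have e2 : d - 1 / n%:R = s ^+ 2 - r^-1 ^+ 2.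
  by rewrite ss -rr exprVn div1r.
rewrite e1 e2; apply: sq_ineq => //; rewrite invr_gt0 //.
Qed.

Theorem lemma6 :
  exists K : nat, forall (R : realType) (n : nat) (xi : R) (rho : 'M[R]_n),
    0 <= xi -> xi <= 1 / 2 ->
    psd rho -> \tr rho = 1 ->
    (forall i, 0 < rho i i) ->
    \sum_i `|rho i i - 1 / n%:R| <= xi ^+ 3 ->
    forall B : 'M[R]_n, is_abs_mx (rho - sigma_of rho) B ->
    \tr B <= K%:R * xi.
Proof.
exists 2%N => R n xi rho xi0 xi1 prho trho dpos hsum B [psdB BB].
case: n rho dpos hsum B psdB BB prho trho => [|n] rho dpos hsum B psdB BB prho trho.
  by rewrite /mxtrace big_ord0; apply: mulr_ge0.
have [W eW] := psd_factor rho prho.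
pose r : R := Num.sqrt n.+1%:R.
have r0 : 0 < r by rewrite sqrtr_gt0 ltr0n.
have rr : r ^+ 2 = n.+1%:R by rewrite sqr_sqrtr // ler0n.
pose c : 'rV[R]_n.+1 := \row_i (r * Num.sqrt (rho i i))^-1.
pose C := diag_mx c.
pose F := diag_mx (\row_i (1 - c 0 i)) *m W.
have eF : F = W - C *m W.
  by rewrite /F /C !mul_diag_mx; apply/matrixP => i j; rewrite !mxE; ring.
have esig : sigma_of rho = C *m rho *m C.
  apply/matrixP => i j; rewrite /sigma_of mul_mx_diag mul_diag_mx !mxE.
  rewrite sqrtrM ?ltW // -rr.
  have si : 0 < Num.sqrt (rho i i) by rewrite sqrtr_gt0.
  have sj : 0 < Num.sqrt (rho j j) by rewrite sqrtr_gt0.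
  field; rewrite !lt0r_neq0 //.
have eA : rho - sigma_of rho = F *m W^T + C *m W *m F^T.
  rewrite esig eF eW linearB /= trmx_mul /C tr_diag_mx mulmxBl mulmxBr !mulmxA.
  by rewrite addrA subrK.
have tWW : \tr (W^T *m W) = 1 by rewrite mxtrace_mulC -eW.
have tCW : \tr ((C *m W)^T *m (C *m W)) = 1.
  rewrite mxtrace_mulC trDiagW -eW.
  rewrite (eq_bigr (fun _ => n.+1%:R^-1)); last first.
    move=> i _; rewrite mxE -rr.
    have si : 0 < Num.sqrt (rho i i) by rewrite sqrtr_gt0.
    have ss : Num.sqrt (rho i i) ^+ 2 = rho i i by rewrite sqr_sqrtr // ltW.
    rewrite -{2}ss; field; rewrite !lt0r_neq0 //.
  by rewrite sumr_const card_ord -[LHS]mulr_natl mulfV // pnatr_eq0.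
have tFF : \tr (F^T *m F) <= xi ^+ 3.
  rewrite mxtrace_mulC trDiagW -eW; apply: le_trans hsum.
  apply: ler_sum => i _; rewrite !mxE; exact: entry_bound.
apply/ler_addgt0Pr => e' e'0.
pose e := e' / n.+2%:R.
have e0 : 0 < e by rewrite divr_gt0.
have [M [hM htr]] := @trace_bound R n.+1 (rho - sigma_of rho) B e e0 psdB BB.
have eAT : (F *m W^T + C *m W *m F^T)^T = W *m F^T + F *m (C *m W)^T.
  by rewrite linearD /= !trmx_mul !trmxK.
rewrite eA eAT mulmxDr mxtraceD in htr.
rewrite mulmxA mxtrace_mulC mulmxA in htr.
rewrite (mulmxA M F) (mxtrace_mulC (M *m F)) mulmxA in htr.
pose s := xi + e.
have s0 : 0 < s by rewrite /s; apply: ltr_wpDl.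
have b1 := @contr_tr R n.+1 M F W s^-1 (ltac:(by rewrite invr_gt0)) hM.
have b2 := @contr_tr R n.+1 M (C *m W) F s s0 hM.
rewrite tWW invrK in b1.
rewrite tCW mulr1 in b2.
set X := \tr (F^T *m F) in tFF b1 b2.
have hY : X / s <= xi.
  rewrite ler_pdivrMr // /s; nra.
have ee : n.+1%:R * e + e = e'.
  by rewrite /e; field; rewrite -natrD pnatr_eq0.
move: htr b1 b2 hY ee; rewrite [s^-1 * X]mulrC.
set T1 := \tr _; set T2 := \tr _; set Y := X / s; set Ne := n.+1%:R * e.
move=> htr b1 b2 hY ee.
have : s = xi + e by [].
lra.
Qed.
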